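(* Let $k \in \mathbb{N}$ with $k \geq 2$. Then $$q(k) < \begin{cases} \frac{k}{3} & \text{if } k \bmod 3 = 0,\\ \left\lceil\frac{k}{2}\right\rceil & \text{otherwise,}\end{cases}$$ i.e. no index $q$ at least this value is admissible.
   Context: For a graph $G$ with an edge-colouring $f\colon E(G)\to\{1,\dots,k\}$ and $1\le j\le k$: $e_j[v]$ is the number of edges coloured $j$ in the subgraph induced by the closed neighbourhood $N[v]$ of $v$, and $\deg_j(v)$ is the number of edges coloured $j$ incident to $v$. Given a strictly increasing sequence of positive integers $(a_1,\dots,a_k)$, a $d$-regular graph $G$ with $d=\sum_j a_j$ is an $(a_1,\dots,a_k)$-flip graph if there is an edge-colouring with colours $\{1,\dots,k\}$ such that $\deg_j(v)=a_j$ for all vertices $v$ and all $j$, and $e_k[v]<e_{k-1}[v]<\dots<e_1[v]$ for every vertex $v$; the sequence is then a $k$-flip sequence. Call an index $q\in\{1,\dots,k-1\}$ admissible if there exists $h\in\mathbb{N}$ such that for every $N\in\mathbb{N}$ there is a $k$-flip sequence $(a_1,\dots,a_k)$ with $a_q=h$ and $a_k>N$; $q(k)$ denotes the largest admissible index. *)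

(* Defs.v *)
From mathcomp Require Import all_boot.
Set Implicit Arguments. Unset Strict Implicit. Unset Printing Implicit Defensive.

Definition simple_graph (T : finType) (adj : rel T) : Prop :=
  (forall x y, adj x y = adj y x) /\ (forall x, ~~ adj x x).

Definition cnbhd (T : finType) (adj : rel T) (v : T) : {set T} :=
  [set u | (u == v) || adj v u].

Definition edge_colouring (T : finType) (adj : rel T) (k : nat)
  (f : T -> T -> nat) : Prop :=
  forall x y, adj x y -> f x y = f y x /\ 1 <= f x y <= k.

Definition deg_col (T : finType) (adj : rel T) (f : T -> T -> nat)
  (j : nat) (v : T) : nat :=
  #|[set u | adj v u && (f v u == j)]|.

Definition e_col (T : finType) (adj : rel T) (f : T -> T -> nat)
  (j : nat) (v : T) : nat :=
  #|[set s : {set T} | [exists x, exists y,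
      [&& s == [set x; y], adj x y, x \in cnbhd adj v, y \in cnbhd adj v
        & f x y == j]]]|.

(* G is an (a_1,...,a_k)-flip graph (sequence given as a : nat -> nat,
   only indices 1..k matter). *)
Definition flip_graph (T : finType) (adj : rel T) (k : nat) (a : nat -> nat)
  : Prop :=
  simple_graph adj /\
  (forall v, #|[set u | adj v u]| = \sum_(1 <= j < k.+1) a j) /\
  exists f : T -> T -> nat,
    edge_colouring adj k f /\
    (forall v j, 1 <= j <= k -> deg_col adj f j v = a j) /\
    (forall v j, 1 <= j < k -> e_col adj f j.+1 v < e_col adj f j v).

Definition pos_strict_incr (k : nat) (a : nat -> nat) : Prop :=
  (forall j, 1 <= j <= k -> 0 < a j) /\
  (forall j, 1 <= j < k -> a j < a j.+1).

Definition flip_sequence (k : nat) (a : nat -> nat) : Prop :=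
  pos_strict_incr k a /\
  exists (T : finType) (adj : rel T), 0 < #|T| /\ flip_graph adj k a.

Definition admissible (k q : nat) : Prop :=
  1 <= q <= k.-1 /\
  exists h : nat, forall N : nat,
    exists a : nat -> nat, flip_sequence k a /\ a q = h /\ N < a k.

Definition q_bound (k : nat) : nat :=
  if k %% 3 == 0 then k %/ 3 else uphalf k.

(* Main.v *)
Require Import Defs.
From mathcomp Require Import all_boot.
From mathcomp Require Import zify.

Section Flip.
Variables (T : finType) (adj : rel T) (f : T -> T -> nat).
Hypothesis adjC : forall x y, adj x y = adj y x.
Hypothesis adjI : forall x, ~~ adj x x.
Hypothesis fC : forall x y, adj x y -> f x y = f y x.

Lemma adj_neq x y : adj x y -> x != y.
Proof. by apply: contraTneq => ->; apply: adjI. Qed.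

Definition FF (v x y : T) := [&& adj x y, x \in cnbhd adj v & y \in cnbhd adj v].

Lemma sum_pair (B : T -> T -> bool) :
  \sum_x \sum_y (B x y : nat) = \sum_(p : T * T | B p.1 p.2) 1.
Proof.
rewrite pair_big [RHS]big_mkcond /=; apply: eq_bigr => p _; by case: (B _ _).
Qed.

Lemma eA v j :
  \sum_x \sum_y ((FF v x y && (f x y == j)) : nat) = 2 * e_col adj f j v.
Proof.
rewrite sum_pair /e_col.
set P := [set s : {set T} | _].
rewrite (partition_big (fun p : T * T => [set p.1; p.2]) (mem P)); last first.
  move=> [x y] /= /andP[/and3P[Hxy Hx Hy] Hf]; rewrite inE.
  by apply/existsP; exists x; apply/existsP; exists y; rewrite eqxx Hxy Hx Hy Hf.
rewrite -sum1_card big_distrr /=; apply: eq_bigr => s.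
rewrite inE => /existsP[x0 /existsP[y0 /and5P[/eqP -> Hxy Hx Hy Hf]]].
have Hn := @adj_neq _ _ Hxy.
rewrite muln1 (eq_bigl (mem [set (x0, y0); (y0, x0)])).
  by rewrite sum1_card cards2 xpair_eqE (negPf Hn).
move=> [x y] /=; rewrite !inE /FF !xpair_eqE.
apply/idP/idP.
  move=> /andP[/andP[/and3P[Hxy' _ _] _] /eqP E].
  have hx : x \in [set x0; y0] by rewrite -E !inE eqxx.
  have hy : y \in [set x0; y0] by rewrite -E !inE eqxx orbT.
  have Hn' := @adj_neq _ _ Hxy'.
  move: hx hy Hn'; rewrite !inE => /orP[]/eqP-> /orP[]/eqP->; rewrite ?eqxx ?orbT //=.
case/orP => /andP[/eqP-> /eqP->]; first by rewrite Hxy Hx Hy Hf eqxx.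
by rewrite adjC Hxy Hx Hy -fC // Hf setUC eqxx.
Qed.

Lemma card_sum (P : T -> bool) : #|[set u | P u]| = \sum_u (P u : nat).
Proof.
rewrite -sum1_card big_mkcond /=; apply: eq_bigr => u _; rewrite inE.
by case: (P u).
Qed.

Lemma sum_eqj (c m n : nat) : \sum_(m <= j < n) (c == j : nat) = (m <= c < n).
Proof.
elim: n => [|n IH]; first by rewrite big_geq //; case: (m <= c) => //; rewrite ltn0 andbF.
case: (leqP m n) => Hmn.
  rewrite big_nat_recr //= IH.
  rewrite ltnS; case: (ltngtP c n) => H; rewrite /= ?addn0 ?andbT ?andbF //.
  by subst; rewrite addn1 Hmn.
rewrite big_geq //.
case: (leqP m c) => H //=.
by rewrite ltnNge (leq_trans Hmn H).
Qed.

Lemma sum_col2 (B : T -> T -> bool) (m n : nat) :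
  \sum_(m <= j < n) \sum_x \sum_y ((B x y && (f x y == j)) : nat) =
  \sum_x \sum_y ((B x y && (m <= f x y < n)) : nat).
Proof.
rewrite exchange_big; apply: eq_bigr => x _.
rewrite exchange_big; apply: eq_bigr => y _.
case: (B x y) => /=; first by apply: sum_eqj.
by rewrite big1.
Qed.

Lemma sum_col1 (x : T) (B : T -> bool) (m n : nat) :
  \sum_(m <= j < n) \sum_y ((B y && (f x y == j)) : nat) =
  \sum_y ((B y && (m <= f x y < n)) : nat).
Proof.
rewrite exchange_big; apply: eq_bigr => y _.
case: (B y) => /=; first by apply: sum_eqj.
by rewrite big1.
Qed.

Lemma decr_mono (g : nat -> nat) lo hi :
  (forall j, lo <= j < hi -> g j.+1 < g j) ->
  forall i j, lo <= i -> i <= j -> j <= hi -> g j <= g i.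
Proof.
move=> H i j Hi Hij; elim: j Hij => [|j IH] Hij Hj.
  by rewrite leqn0 in Hij; rewrite (eqP Hij).
case: (ltngtP i j.+1) Hij => // Hlt _.
  apply: leq_trans (ltnW (H j _)) (IH _ _) => //.
  by rewrite (leq_trans Hi) //=.
  by apply: ltnW.
by rewrite Hlt.
Qed.

Lemma incr_mono (g : nat -> nat) lo hi :
  (forall j, lo <= j < hi -> g j < g j.+1) ->
  forall i j, lo <= i -> i <= j -> j <= hi -> g i <= g j.
Proof.
move=> H i j Hi Hij; elim: j Hij => [|j IH] Hij Hj.
  by rewrite leqn0 in Hij; rewrite (eqP Hij).
case: (ltngtP i j.+1) Hij => // Hlt _.
  apply: leq_trans (IH _ _) (ltnW (H j _)) => //.
  by apply: ltnW.
  by rewrite (leq_trans Hi) //=.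
by rewrite Hlt.
Qed.

Lemma le3 (b b1 b2 b3 : bool) : (b -> [|| b1, b2 | b3]) -> b <= b1 + b2 + b3.
Proof. by case: b; case: b1; case: b2; case: b3 => // /(_ isT). Qed.

Lemma ge3 (b b1 b2 b3 : bool) : (b1 -> b) -> (b2 -> b) -> (b3 -> b) ->
  ~~ (b1 && b2) -> ~~ (b1 && b3) -> ~~ (b2 && b3) -> b1 + b2 + b3 <= b.
Proof. by case: b; case: b1; case: b2; case: b3 => // /(_ isT). Qed.


Variables (k q d : nat) (a : nat -> nat).
Hypothesis Hcol : forall x y, adj x y -> 1 <= f x y <= k.
Hypothesis Hdeg : forall v j, 1 <= j <= k -> deg_col adj f j v = a j.
Hypothesis Hreg : forall v, #|[set u | adj v u]| = d.
Hypothesis Hchain : forall v j, 1 <= j < k -> e_col adj f j.+1 v < e_col adj f j v.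
Hypothesis Hq : 1 <= q < k.
Hypothesis H3 : k <= 3 * q.

Definition ss := \sum_(1 <= j < q.+1) a j.

Definition Sm v x y := FF v x y && (f x y <= q).
Definition Lg v x y := FF v x y && (q < f x y).

Lemma smalldeg x : \sum_u ((adj x u && (f x u <= q)) : nat) = ss.
Proof.
rewrite /ss big_nat_cond.
have E : forall j, (1 <= j < q.+1) && true -> a j = \sum_u ((adj x u && (f x u == j)) : nat).
  move=> j /andP[/andP[H1 H2] _]; rewrite -(Hdeg x); first by rewrite /deg_col card_sum.
  rewrite H1 /=; case/andP: Hq => _ Hk; lia.
rewrite (eq_bigr _ E) -big_nat_cond sum_col1; apply: eq_bigr => u _.
case E': (adj x u) => //=; have /andP[-> _] := Hcol _ _ E'; by [].
Qed.

Lemma largedeg x : \sum_u ((adj x u && (q < f x u)) : nat) = d - ss.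
Proof.
rewrite -(smalldeg x) -(Hreg x) card_sum.
have -> : \sum_u (adj x u : nat) =
   \sum_u ((adj x u && (f x u <= q)) : nat) + \sum_u ((adj x u && (q < f x u)) : nat).
  rewrite -big_split /=; apply: eq_bigr => u _.
  by case: (adj x u); rewrite //= ltnNge; case: (f x u <= q).
by rewrite addKn.
Qed.

Lemma pervertex v :
  \sum_x \sum_y (Lg v x y : nat) <= 2 * \sum_x \sum_y (Sm v x y : nat).
Proof.
have eS : \sum_x \sum_y (Sm v x y : nat) = 2 * \sum_(1 <= j < q.+1) e_col adj f j v.
  rewrite big_distrr /=.
  under [RHS]eq_bigr => j _ do rewrite -eA.
  rewrite sum_col2; apply: eq_bigr => x _; apply: eq_bigr => y _.
  rewrite /Sm; case E: (FF v x y) => //=.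
  by move: E => /and3P[/Hcol/andP[-> _] _ _].
have eL : \sum_x \sum_y (Lg v x y : nat) = 2 * \sum_(q.+1 <= j < k.+1) e_col adj f j v.
  rewrite big_distrr /=.
  under [RHS]eq_bigr => j _ do rewrite -eA.
  rewrite sum_col2; apply: eq_bigr => x _; apply: eq_bigr => y _.
  rewrite /Lg; case E: (FF v x y) => //=.
  by rewrite ltnS; move: E => /and3P[/Hcol/andP[_ ->] _ _]; rewrite andbT.
rewrite eS eL leq_pmul2l //.
set e := fun j => e_col adj f j v.
have Hm := @decr_mono e 1 k (fun j Hj => Hchain v j Hj).
have HL : \sum_(q.+1 <= j < k.+1) e j <= (k - q) * e q.
  rewrite -[k - q]/(k.+1 - q.+1) -sum_nat_const_nat big_nat_cond [X in _ <= X]big_nat_cond.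
  apply: leq_sum => j /andP[/andP[H1 H2] _]; apply: Hm => //.
    by case/andP: Hq.
  by apply: ltnW.
have HS : q * e q <= \sum_(1 <= j < q.+1) e j.
  have Hc : \sum_(1 <= j < q.+1) e q = q * e q by rewrite sum_nat_const_nat subn1.
  rewrite -Hc big_nat_cond [X in _ <= X]big_nat_cond.
  apply: leq_sum => j /andP[/andP[H1 H2] _]; apply: Hm => //.
  by case/andP: Hq => _ /ltnW.
apply: (leq_trans HL).
have H2 : 2 * (q * e q) <= 2 * \sum_(1 <= j < q.+1) e j by rewrite leq_pmul2l.
apply: leq_trans H2.
rewrite mulnA leq_mul2r; apply/orP; right; lia.
Qed.


Definition Cc v x y := adj x y && (adj v x && (adj v y && ((f x y <= q) && ((q < f v x) && (q < f v y))))).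
Definition sn x v := (v == x) || (adj x v && (f x v <= q)).
Definition sm x y := adj x y && (f x y <= q).

Lemma sumc (c : nat) : \sum_(x : T) c = #|T| * c.
Proof. by rewrite sum_nat_const. Qed.

Lemma sum3_le (G H : T -> T -> T -> nat) : (forall v x y, G v x y <= H v x y) ->
  \sum_v \sum_x \sum_y G v x y <= \sum_v \sum_x \sum_y H v x y.
Proof. by move=> GH; do 3 (apply: leq_sum => ? _). Qed.

Lemma sum3_add (G H : T -> T -> T -> nat) :
  \sum_v \sum_x \sum_y (G v x y + H v x y) =
  \sum_v \sum_x \sum_y G v x y + \sum_v \sum_x \sum_y H v x y.
Proof.
rewrite -big_split; apply: eq_bigr => v _; rewrite -big_split; apply: eq_bigr => x _.
by rewrite -big_split.
Qed.

Lemma sum_sn x : \sum_v (sn x v : nat) <= 1 + ss.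
Proof.
rewrite (bigD1 x) //= /sn eqxx /= add1n ltnS -(smalldeg x) [X in _ <= X](bigD1 x) //=.
apply: leq_trans (leq_addl _ _); apply: leq_sum => v /negPf Hv; by rewrite Hv.
Qed.

Lemma sum_B1 : \sum_v \sum_x \sum_y ((sn x v && sm x y) : nat) <= #|T| * ((1 + ss) * ss).
Proof.
rewrite exchange_big /= -sumc; apply: leq_sum => x _.
have E : forall v, \sum_y ((sn x v && sm x y) : nat) = sn x v * ss.
  move=> v; rewrite -(smalldeg x) big_distrr /=; apply: eq_bigr => y _.
  by rewrite mulnb.
rewrite (eq_bigr _ (fun v _ => E v)) -big_distrl /= leq_mul2r; apply/orP; right.
exact: sum_sn.
Qed.

Lemma sum_B2 : \sum_v \sum_x \sum_y ((sn y v && sm y x) : nat) =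
               \sum_v \sum_x \sum_y ((sn x v && sm x y) : nat).
Proof. by apply: eq_bigr => v _; rewrite exchange_big. Qed.

Lemma Sm_point v x y :
  Sm v x y -> [|| Cc v x y, sn x v && sm x y | sn y v && sm y x].
Proof.
rewrite /Sm /FF /Cc /sn /sm !inE => /andP[/and3P[Hxy Hx Hy] Hf].
case: (eqVneq x v) Hx => [Exv|Hxv] Hx; first by subst x; rewrite /= Hxy Hf /= orbT.
case: (eqVneq y v) Hy => [Eyv|Hyv] Hy.
  subst y; have Hvx : adj v x by rewrite adjC.
  by rewrite /= Hvx -(fC _ _ Hxy) Hf !orbT.
rewrite /= in Hx Hy; rewrite Hxy Hf Hx Hy /=.
case: (leqP (f v x) q) => H1.
  have Hxv' : adj x v by rewrite adjC.
  by rewrite Hxv' (fC _ _ Hxv') H1 /=.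
case: (leqP (f v y) q) => H2 //.
have Hyv' : adj y v by rewrite adjC.
have Hyx : adj y x by rewrite adjC.
by rewrite Hyv' Hyx (fC _ _ Hyv') (fC _ _ Hyx) H2 Hf /= ?orbT.
Qed.

Lemma Lg_point a0 b c :
  ((a0 == b) && adj b c && (q < f b c)) + Cc b a0 c + Cc c a0 b <= Lg a0 b c.
Proof.
apply: ge3; rewrite /Lg /FF /Cc ?inE.
- by case/andP=> [/andP[/eqP-> ->] ->]; rewrite eqxx /= orbT.
- case/and5P=> Hac Hba Hbc _ /andP[_ ->]; rewrite Hbc adjC Hba Hac !orbT //.
- case/and5P=> Hab Hca Hcb _ /andP[_ H]; rewrite adjC Hcb Hab adjC Hca fC ?H ?orbT //.
  by rewrite adjC.
- apply/negP => /andP[/andP[/andP[/eqP-> _] _] /andP[_ /andP[Hbb _]]].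
  by rewrite (negPf (adjI _)) in Hbb.
- apply/negP => /andP[/andP[/andP[/eqP-> _] _] /andP[Hbb _]].
  by rewrite (negPf (adjI _)) in Hbb.
- apply/negP => /andP[/and5P[Hac _ _ H1 _] /and5P[_ _ _ _ /andP[H2 _]]].
  rewrite -(fC _ _ Hac) in H2.
  by move: (leq_ltn_trans H1 H2); rewrite ltnn.
Qed.

Lemma counting :
  #|T| * (d - ss) <= 4 * (#|T| * ((1 + ss) * ss)).
Proof.
set TC := \sum_v \sum_x \sum_y (Cc v x y : nat).
set TB := \sum_v \sum_x \sum_y ((sn x v && sm x y) : nat).
have HS : \sum_v \sum_x \sum_y (Sm v x y : nat) <= TC + TB + TB.
  rewrite {2}/TB -sum_B2 /TC /TB -!sum3_add; apply: sum3_le => v x y.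
  exact: le3 (@Sm_point v x y).
have HL : #|T| * (d - ss) + TC + TC <= \sum_v \sum_x \sum_y (Lg v x y : nat).
  have E1 : \sum_v \sum_x \sum_y (((v == x) && adj x y && (q < f x y)) : nat) = #|T| * (d - ss).
    rewrite -sumc; apply: eq_bigr => v _.
    rewrite (bigD1 v) //= eqxx /= [X in _ + X]big1 ?addn0; first exact: largedeg v.
    move=> x Hx; apply: big1 => y _; by rewrite eq_sym (negPf Hx).
  have E2 : \sum_v \sum_x \sum_y (Cc x v y : nat) = TC by rewrite exchange_big.
  have E3 : \sum_v \sum_x \sum_y (Cc y v x : nat) = TC.
    rewrite /TC; under eq_bigr => v _ do rewrite exchange_big.
    by rewrite exchange_big.
  rewrite -E1 -{1}E2 -E3 -!sum3_add; apply: sum3_le => v x y.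
  exact: Lg_point.
have HV : \sum_v \sum_x \sum_y (Lg v x y : nat) <= 2 * \sum_v \sum_x \sum_y (Sm v x y : nat).
  rewrite big_distrr /=; apply: leq_sum => v _; exact: pervertex.
have HB := sum_B1; rewrite -/TB in HB.
move: HL HV HS HB.
set P1 := #|T| * (d - ss). set P2 := #|T| * ((1 + ss) * ss).
set L := \sum_v \sum_x \sum_y (Lg v x y : nat).
set S := \sum_v \sum_x \sum_y (Sm v x y : nat).
lia.
Qed.

End Flip.
Lemma t1 (k q : nat) : 3 * q < k -> q < q_bound k.
Proof. rewrite /q_bound uphalfE; case: ifP => /eqP Hm; lia. Qed.

Theorem theorem4p2 (k : nat) : 2 <= k ->
  forall q : nat, admissible k q -> q < q_bound k.
Proof.
move=> Hk q [/andP[Hq1 Hqk] [h Hh]].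
have Hq : 0 < q < k by rewrite Hq1 /=; lia.
apply: t1; rewrite ltnNge; apply/negP => H3.
have [a [[[Hpos Hinc] [T [adj [HT [[adjC adjI] [Hreg [f [Hcol [Hdeg Hchain]]]]]]]]] [Haq HN]]]
  := Hh (q * h + 4 * ((1 + q * h) * (q * h))).
have fC : forall x y, adj x y -> f x y = f y x := fun x y H => (Hcol x y H).1.
have Hcol' : forall x y, adj x y -> 0 < f x y <= k := fun x y H => (Hcol x y H).2.
have C := @counting T adj f adjC adjI fC k q _ a Hcol' Hdeg Hreg Hchain Hq H3.
rewrite mulnCA leq_pmul2l // in C.
have Hs : ss q a <= q * h.
  rewrite /ss -{2}[q](subn1 q.+1) -sum_nat_const_nat big_nat_cond [X in _ <= X]big_nat_cond.
  apply: leq_sum => j /andP[/andP[H1 H2] _]; rewrite -Haq.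
  apply: (@incr_mono a 1 k Hinc j q) => //; lia.
have Hd : a k <= \sum_(1 <= j < k.+1) a j.
  rewrite big_nat_recr /=; [exact: leq_addl | lia].
have Hm : (1 + ss q a) * ss q a <= (1 + q * h) * (q * h) by apply: leq_mul; lia.
move: C Hs Hd Hm HN; set s := ss q a; set P := (1 + s) * s; set Q := (1 + q * h) * (q * h).
set D := \sum_(1 <= j < k.+1) a j; set qh := q * h.
lia.
Qed.
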